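(* Let $S$ be a monoid in which the unique maximal right ideal $\mathfrak{M}$ is a two-sided ideal. Let $A$ be a finitely generated quasi-strongly faithful right $S$-act with a unique zero element $\theta$. If $AI=A$ for some proper right ideal $I$ of $S$, then $A=\{\theta\}$.
   Context: $S$ is a monoid with identity $1$ having at least one right non-invertible element. A (right) $S$-act is a nonempty set $A$ with a map $A\times S\to A$, $(a,s)\mapsto as$, such that $a1=a$ and $a(st)=(as)t$ for all $a\in A$, $s,t\in S$. An element $\theta\in A$ is a zero if $\theta s=\theta$ for all $s\in S$. $\mathfrak{M}=\{s\in S \mid st\neq 1 \text{ for all } t\in S\}$ is the set of right non-invertible elements; it is the unique maximal right ideal of $S$, and every proper right ideal is contained in it. For a right ideal $I$, $AI=\{as\mid a\in A,\ s\in I\}$. $A$ is finitely generated if there is a finite $X\subseteq A$ with $A=\bigcup_{x\in X}xS$. An $S$-act $A$ is called quasi-strongly faithful if for $a\in A$ and $s\in S$, the equality $as=a$ implies $s\notin\mathfrak{M}$ (when $A$ has a unique zero $\theta$, this is required only for $a\neq\theta$). *)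

(* Defs.v *)
From Stdlib Require Import List.
Set Implicit Arguments.

Section Defs.
Variables (S : Type) (mul : S -> S -> S) (one : S).

Definition is_monoid : Prop :=
  (forall x y z, mul x (mul y z) = mul (mul x y) z) /\
  (forall x, mul one x = x) /\ (forall x, mul x one = x).

Definition right_noninv (s : S) : Prop := forall t, mul s t <> one.

Definition right_ideal (I : S -> Prop) : Prop :=
  (exists s, I s) /\ (forall s t, I s -> I (mul s t)).

Definition two_sided_ideal (I : S -> Prop) : Prop :=
  (exists s, I s) /\ (forall s t, I s -> I (mul s t)) /\
  (forall s t, I s -> I (mul t s)).

Definition proper (I : S -> Prop) : Prop := exists s, ~ I s.

Variables (A : Type) (act : A -> S -> A).

Definition is_act : Prop :=
  (forall a, act a one = a) /\ (forall a s t, act a (mul s t) = act (act a s) t).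

Definition is_zero (z : A) : Prop := forall s, act z s = z.

Definition unique_zero (z : A) : Prop :=
  is_zero z /\ forall z', is_zero z' -> z' = z.

Definition finitely_generated : Prop :=
  exists X : list A, forall a, exists x s, In x X /\ act x s = a.

Definition quasi_strongly_faithful : Prop :=
  forall a s, act a s = a ->
    ~ right_noninv s \/ (exists th, unique_zero th /\ a = th).

(** A I = A  (the inclusion AI ⊆ A is automatic). *)
Definition act_ideal_eq (I : S -> Prop) : Prop :=
  forall a, exists b s, I s /\ act b s = a.

End Defs.

(* Main.v *)
Require Import Defs.
From Stdlib Require Import List Lia Classical ClassicalEpsilon.

Fixpoint gl {A} (f : nat -> A) (n : nat) : list A :=
  match n with 0 => nil | S k => f k :: gl f k end.

Lemma gl_len {A} (f : nat -> A) n : length (gl f n) = n.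
Proof. induction n; simpl; auto. Qed.

Lemma gl_in {A} (f : nat -> A) n x : In x (gl f n) -> exists i, i < n /\ f i = x.
Proof.
  induction n; simpl; [tauto|]. intros [H|H].
  - exists n; split; auto.
  - destruct (IHn H) as [i [Hi Hx]]; exists i; split; auto.
Qed.

Lemma pigeon {A} (f : nat -> A) (X : list A) :
  (forall n, In (f n) X) -> exists i j, i < j /\ f i = f j.
Proof.
  intros HX. apply NNPP; intro Hn.
  assert (ND : NoDup (gl f (S (length X)))).
  { generalize (S (length X)) as n. induction n; simpl; constructor; auto.
    intro Hin. destruct (gl_in f n _ Hin) as [i [Hi Hx]]. apply Hn; eauto. }
  pose proof (@NoDup_incl_length _ _ X ND) as L.
  assert (incl (gl f (S (length X))) X).
  { intros x Hx. destruct (gl_in _ _ _ Hx) as [i [_ <-]]; auto. }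
  specialize (L H). rewrite gl_len in L. lia.
Qed.

Lemma arith_aux i j : i < j -> j = Nat.succ ((j - Nat.succ i) + i).
Proof. unfold Nat.succ; lia. Qed.

Theorem theorem2p11
  (S : Type) (mul : S -> S -> S) (one : S)
  (HS : is_monoid mul one)
  (Hnoninv : exists s, right_noninv mul one s)
  (HM : two_sided_ideal mul (right_noninv mul one))
  (A : Type) (act : A -> S -> A)
  (HA : is_act mul one act)
  (th : A) (Hth : unique_zero act th)
  (Hfg : finitely_generated act)
  (Hqsf : quasi_strongly_faithful mul one act)
  (I : S -> Prop) (HI : right_ideal mul I) (HIp : proper I)
  (HAI : act_ideal_eq act I) :
  forall a : A, a = th.
Proof.
  destruct HS as [Hass [H1l H1r]].
  destruct HM as [_ [HMr HMl]].
  destruct HA as [Ha1 Hamul].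
  destruct Hth as [Hz Hzu].
  destruct Hfg as [X HX].
  destruct HI as [_ HIr].
  destruct HIp as [s0 Hs0].
  assert (IM : forall s, I s -> right_noninv mul one s).
  { intros s Hs t Ht. apply Hs0. rewrite <- H1l. rewrite <- Ht.
    rewrite <- Hass. apply HIr. exact Hs. }
  set (le := fun a b => exists m, right_noninv mul one m /\ a = act b m).
  assert (Htr : forall a b c, le a b -> le b c -> le a c).
  { intros a b c [m [Hm ->]] [n [Hn ->]]. exists (mul n m); split.
    - apply HMl; auto.
    - rewrite Hamul; auto. }
  assert (Hstep : forall a, exists y, In y X /\ le a y).
  { intro a. destruct (HAI a) as [b [s [Hs <-]]].
    destruct (HX b) as [x [t [Hx <-]]]. exists x; split; auto.
    exists (mul t s); split.
    - apply HMl; auto.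
    - rewrite Hamul; auto. }
  assert (Hself : forall a, le a a -> a = th).
  { intros a [m [Hm He]]. destruct (Hqsf a m (eq_sym He)) as [C|[t [[Ht Htu] ->]]].
    - contradiction.
    - apply Hzu; auto. }
  intro a.
  destruct (choice _ Hstep) as [nx Hnx].
  set (f := fun n => Nat.iter (Nat.succ n) nx a).
  assert (Hf : forall n, In (f n) X) by (intro n; apply Hnx).
  assert (Hfs : forall n, le (f n) (f (Nat.succ n))) by (intro n; apply Hnx).
  assert (Hlt : forall i k, le (f i) (f (Nat.succ (k + i)))).
  { intros i k; induction k; simpl; auto. eapply Htr; [exact IHk|apply Hfs]. }
  destruct (pigeon f X Hf) as [i [j [Hij Heq]]].
  assert (Hth0 : f i = th).
  { apply Hself. replace j with (Nat.succ ((j - Nat.succ i) + i)) in Heq by (symmetry; apply arith_aux; exact Hij).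
    rewrite Heq at 2. apply Hlt. }
  assert (Ha : forall k, le a (f k)).
  { induction k.
    - apply Hnx.
    - eapply Htr; [exact IHk|apply Hfs]. }
  specialize (Ha i).
  destruct Ha as [m [_ Hm]]. rewrite Hm, Hth0. apply Hz.
Qed.
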